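(* Let $K=\mathbb{R}$ and assume $\tau_{(i)}>0$, $\eta_{(i)}>-1$, $\eta_{(i)}\neq0$ for all $i\in\Omega$, where $|\Omega|=n$. Let $\Theta=\{\pi(\Omega,M)\mid M\in\mathcal{I}(\overline{\mathbf{P}})\}$. Then $|\Theta|\geqslant n+1$, and the following are equivalent: (1) $|\Theta|=n+1$; (2) for any $C,D\in\mathcal{I}(\overline{\mathbf{P}})$, $|C|=|D|$ implies $\pi(\Omega,C)=\pi(\Omega,D)$; (3) for any $C,D\in\mathcal{I}(\overline{\mathbf{P}})$, $\pi(\Omega,C)=\pi(\Omega,D)$ if and only if $|C|=|D|$; (4) $\mathbf{P}$ is hierarchical, and for any $u,v\in\Omega$ with $\mathrm{len}(u)=\mathrm{len}(v)$ we have $\eta_{(u)}=\eta_{(v)}$.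
   Context: $\Omega$ is a finite set and $\mathbf{P}=(\Omega,\preccurlyeq_{\mathbf{P}})$ a poset; $\overline{\mathbf{P}}$ is the dual poset and $\mathcal{I}(\overline{\mathbf{P}})$ its set of ideals (up-closed subsets of $\mathbf{P}$). For $Y\subseteq\Omega$: $\max(Y)$ is the set of maximal elements of $Y$ w.r.t. $\preccurlyeq_{\mathbf{P}}$; $\mathcal{I}(Y)$ is the set of down-closed subsets of $Y$. $\tau,\eta\in\mathbb{R}^{\Omega}$. For $D,I\subseteq\Omega$, $\varphi(D,I)=(-1)^{|I\cap D|}\big(\prod_{i\in I-\max(I)}\tau_{(i)}\big)\big(\prod_{i\in\max(I)-D}\eta_{(i)}\big)$ if $I\cap D\subseteq\max(I)$, and $0$ otherwise; for $D\subseteq Y\subseteq\Omega$, $\pi(Y,D)=\sum_{I\in\mathcal{I}(Y)}\varphi(D,I)x^{|I|}\in\mathbb{R}[x]$. $\mathrm{len}(y)$ is the largest cardinality of a chain in $\mathbf{P}$ with greatest element $y$; $\mathbf{P}$ is hierarchical if $\mathrm{len}(u)+1\leqslant\mathrm{len}(v)$ implies $u\preccurlyeq_{\mathbf{P}}v$. *)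

(* Defs.v *)
From HB Require Import structures.
From mathcomp Require Import all_boot all_order all_algebra.
Set Implicit Arguments. Unset Strict Implicit. Unset Printing Implicit Defensive.
Import Order.TTheory GRing.Theory Num.Theory.

Local Open Scope ring_scope.

Section Defs.
(* Omega is the finite carrier T of a finite poset P. *)
Context (d : Order.disp_t) (T : finPOrderType d).

Definition maxset (Y : {set T}) : {set T} :=
  [set y in Y | [forall z in Y, (y <= z)%O ==> (z == y)]].

(* ideals of the dual poset: up-closed subsets of P *)
Definition upclosed (M : {set T}) : bool :=
  [forall x in M, forall y, (x <= y)%O ==> (y \in M)].

Definition downclosed_in (Y I : {set T}) : bool :=
  (I \subset Y) && [forall x in I, forall y in Y, (y <= x)%O ==> (y \in I)].

Variables (R : realFieldType) (tau eta : T -> R).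

Definition phi (D I : {set T}) : R :=
  if I :&: D \subset maxset I then
    (-1) ^+ #|I :&: D| * (\prod_(i in I :\: maxset I) tau i)
                       * (\prod_(i in maxset I :\: D) eta i)
  else 0.

Definition pi_poly (Y D : {set T}) : {poly R} :=
  \sum_(I : {set T} | downclosed_in Y I) phi D I *: 'X^#|I|.

Definition Theta : seq {poly R} :=
  undup [seq pi_poly setT M | M <- enum [pred M : {set T} | upclosed M]].

End Defs.

Section Len.
Context (d : Order.disp_t) (T : finPOrderType d).

Definition is_chain (C : {set T}) : bool :=
  [forall x in C, forall y in C, (x <= y)%O || (y <= x)%O].

Definition len (y : T) : nat :=
  \max_(C : {set T} | is_chain C && (y \in C) && [forall z in C, (z <= y)%O]) #|C|.

Definition hierarchical : Prop :=
  forall u v : T, (len u + 1 <= len v)%N -> (u <= v)%O.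
End Len.

(* Main.v *)
Require Import Defs.
From HB Require Import structures.
From mathcomp Require Import all_boot all_order all_algebra.
Import Order.TTheory GRing.Theory Num.Theory.
From mathcomp Require Import zify.
Set Implicit Arguments. Unset Strict Implicit.

Section Comb.
Context (d : Order.disp_t) (T : finPOrderType d).
Implicit Types (x y z u v w m : T) (S X Y C D I : {set T}).

Lemma ex_minimal S x : x \in S ->
  exists2 z, z \in S & ((z <= x)%O /\ forall y, y \in S -> (y <= z)%O -> y = z).
Proof.
move: x; suff H: forall n x, #|[set y in S | (y < x)%O]| <= n -> x \in S ->
  exists2 z, z \in S & ((z <= x)%O /\ forall y, y \in S -> (y <= z)%O -> y = z).
  by move=> x; apply: (H _ x (leqnn _)).
elim=> [|n IH] x Hn Sx.
  exists x => //; split=> // y Sy yx; apply/eqP; apply: contraT => nyx.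
  have : y \in [set y in S | (y < x)%O] by rewrite inE Sy lt_neqAle nyx yx.
  by move: Hn; rewrite leqn0 cards_eq0 => /eqP->; rewrite inE.
case: (boolP [exists y in S, (y < x)%O]) => [/existsP[y /andP[Sy yx]]|].
  have [|z Sz [zy zmin]] := IH y _ Sy.
    rewrite -ltnS; apply: leq_trans Hn; apply: proper_card.
    apply/properP; split.
      apply/subsetP=> t; rewrite !inE => /andP[-> ty]; exact: lt_trans ty yx.
    by exists y; rewrite !inE ?Sy ?yx // ltxx andbF.
  exists z => //; split; first exact: le_trans zy (ltW yx).
  exact: zmin.
rewrite negb_exists => /forallP nb.
exists x => //; split=> // y Sy yx; apply/eqP; apply: contraT => nyx.
by move: (nb y); rewrite Sy /= lt_neqAle nyx yx.
Qed.

Lemma ex_maximal S x : x \in S ->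
  exists2 z, z \in S & ((x <= z)%O /\ forall y, y \in S -> (z <= y)%O -> y = z).
Proof.
move: x; suff H: forall n x, #|[set y in S | (x < y)%O]| <= n -> x \in S ->
  exists2 z, z \in S & ((x <= z)%O /\ forall y, y \in S -> (z <= y)%O -> y = z).
  by move=> x; apply: (H _ x (leqnn _)).
elim=> [|n IH] x Hn Sx.
  exists x => //; split=> // y Sy yx; apply/eqP; apply: contraT => nyx.
  have : y \in [set y in S | (x < y)%O] by rewrite inE Sy lt_neqAle eq_sym nyx yx.
  by move: Hn; rewrite leqn0 cards_eq0 => /eqP->; rewrite inE.
case: (boolP [exists y in S, (x < y)%O]) => [/existsP[y /andP[Sy yx]]|].
  have [|z Sz [zy zmin]] := IH y _ Sy.
    rewrite -ltnS; apply: leq_trans Hn; apply: proper_card.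
    apply/properP; split.
      apply/subsetP=> t; rewrite !inE => /andP[-> ty]; exact: lt_trans yx ty.
    by exists y; rewrite !inE ?Sy ?yx // ltxx andbF.
  exists z => //; split; first exact: le_trans (ltW yx) zy.
  exact: zmin.
rewrite negb_exists => /forallP nb.
exists x => //; split=> // y Sy yx; apply/eqP; apply: contraT => nyx.
by move: (nb y); rewrite Sy /= lt_neqAle eq_sym nyx yx.
Qed.

Lemma upclosedP X : reflect (forall x y, x \in X -> (x <= y)%O -> y \in X) (upclosed X).
Proof.
apply: (iffP forall_inP) => [H x y Xx xy|H x Xx].
  by move: (H x Xx) => /forallP/(_ y)/implyP; apply.
by apply/forallP=> y; apply/implyP; apply: H.
Qed.

Lemma downclosedP I : reflect (forall x y, x \in I -> (y <= x)%O -> y \in I)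
  (downclosed_in setT I).
Proof.
rewrite /downclosed_in subsetT /=.
apply: (iffP forall_inP) => [H x y Xx xy|H x Xx].
  by move: (H x Xx) => /forall_inP/(_ y (in_setT _))/implyP; apply.
by apply/forall_inP=> y _; apply/implyP; apply: H.
Qed.

Lemma in_maxset I y : (y \in Defs.maxset I) = (y \in I) && [forall z in I, (y <= z)%O ==> (z == y)].
Proof. by rewrite /Defs.maxset inE. Qed.

End Comb.
Section Len.
Context (d : Order.disp_t) (T : finPOrderType d).
Implicit Types (x y z u v w m : T) (S X Y C D I : {set T}).

Definition chainP y C := is_chain C && (y \in C) && [forall z in C, (z <= y)%O].

Lemma len_ge y C : chainP y C -> #|C| <= len y.
Proof. by move=> H; rewrite /len; apply: (leq_bigmax_cond C H). Qed.

Lemma len_ex y : exists2 C, chainP y C & #|C| = len y.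
Proof.
have [|C HC Hmax] := @eq_bigmax_cond _ [pred C : {set T} | chainP y C] (fun C => #|C|).
  apply/card_gt0P; exists [set y]; rewrite inE /chainP /is_chain set11 andbT.
  apply/andP; split; apply/forall_inP => a; rewrite inE => /eqP->//.
  by apply/forall_inP=> b; rewrite inE => /eqP->; rewrite lexx.
by exists C => //; rewrite -Hmax.
Qed.

Lemma len_gt0 y : 0 < len y.
Proof.
apply: leq_trans (@len_ge y [set y] _); first by rewrite cards1.
rewrite /chainP /is_chain set11 andbT.
apply/andP; split; apply/forall_inP => a; rewrite inE => /eqP->//.
by apply/forall_inP=> b; rewrite inE => /eqP->; rewrite lexx.
Qed.

Lemma len_lt x y : (x < y)%O -> len x < len y.
Proof.
move=> xy; have [C /andP[/andP[ch xC] lex] <-] := len_ex x.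
have yC : y \notin C.
  apply/negP=> yC; move: (forall_inP lex y yC) => yx.
  by move: (lt_le_trans xy yx); rewrite ltxx.
have eC : #|y |: C| = (#|C|).+1 by rewrite cardsU1 yC.
rewrite -eC; apply: len_ge; rewrite /chainP setU11 andbT; apply/andP; split.
  apply/forall_inP=> a; rewrite in_setU1 => /predU1P[->|aC];
  apply/forall_inP=> b; rewrite in_setU1 => /predU1P[->|bC].
  - by rewrite lexx.
  - by rewrite (le_trans (forall_inP lex b bC) (ltW xy)) orbT.
  - by rewrite (le_trans (forall_inP lex a aC) (ltW xy)).
  - exact: (forall_inP (forall_inP ch a aC) b bC).
apply/forall_inP=> a; rewrite in_setU1 => /predU1P[->|aC]; first exact: lexx.
exact: (le_trans (forall_inP lex a aC) (ltW xy)).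
Qed.

Lemma len_pred v : 1 < len v -> exists2 w, (w < v)%O & (len w).+1 = len v.
Proof.
move=> lv; have [C /andP[/andP[ch vC] lev] eC] := len_ex v.
have eC' : (#|C :\ v|).+1 = len v by rewrite -eC (cardsD1 v C) vC.
have : 0 < #|C :\ v| by rewrite -ltnS eC'.
case/card_gt0P => a aC.
have [w wC [_ wmax]] := ex_maximal aC.
have wv : (w < v)%O.
  move: wC; rewrite !inE => /andP[wv wC']; rewrite lt_neqAle wv.
  exact: (forall_inP lev w wC').
exists w => //; apply/eqP; rewrite eqn_leq len_lt //=.
rewrite -eC' ltnS.
apply: len_ge; rewrite /chainP wC andbT; apply/andP; split.
  apply/forall_inP=> a' a'C; apply/forall_inP=> b' b'C.
  move: a'C b'C; rewrite !inE => /andP[_ a'C] /andP[_ b'C].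
  exact: (forall_inP (forall_inP ch a' a'C) b' b'C).
apply/forall_inP=> b bC; move: (bC); rewrite !inE => /andP[_ bC'].
move: wC; rewrite !inE => /andP[_ wC'].
case/orP: (forall_inP (forall_inP ch b bC') w wC') => // wb.
by rewrite (wmax b bC wb) lexx.
Qed.

Lemma hier_lt (H : hierarchical T) x y : (x < y)%O = (len x < len y).
Proof.
apply/idP/idP; first exact: len_lt.
move=> lxy; have xy : (x <= y)%O by apply: H; rewrite addn1.
rewrite lt_neqAle xy andbT; apply/eqP=> exy; move: lxy; rewrite exy ltnn.
by [].
Qed.

End Len.

Section Poly.
Context (d : Order.disp_t) (T : finPOrderType d) (R : realFieldType) (tau eta : T -> R).
Local Open Scope ring_scope.
Hypothesis htau : forall i, 0 < tau i.
Hypothesis heta1 : forall i, -1 < eta i.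
Implicit Types (x y z u v w m : T) (S X Y C D I : {set T}).

Local Notation pi D := (pi_poly tau eta setT D).
Definition dn m : {set T} := [set z | (z <= m)%O].

Lemma coef_pi D k : (pi D)`_k =
  \sum_(I | downclosed_in setT I && (#|I| == k)%N) phi tau eta D I.
Proof.
rewrite /pi_poly coef_sum [RHS]big_mkcondr /=; apply: eq_bigr => I _.
by rewrite coefZ coefXn eq_sym; case: eqP => _; rewrite ?mulr1 ?mulr0.
Qed.

Lemma phi_notin X m I : m \notin I -> phi tau eta (m |: X) I = phi tau eta X I.
Proof.
move=> mI.
have e1 : I :&: (m |: X) = I :&: X.
  apply/setP=> z; rewrite !inE; case: (z =P m) => [->|] //=.
  by rewrite (negbTE mI).
have e2 : Defs.maxset I :\: (m |: X) = Defs.maxset I :\: X.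
  apply/setP=> z; rewrite !inE; case: (z =P m) => [->|] //=.
  by rewrite (negbTE mI) andbF.
by rewrite /phi e1 e2.
Qed.

Lemma dn_sub m I : downclosed_in setT I -> m \in I -> dn m \subset I.
Proof.
move=> /downclosedP dI mI; apply/subsetP=> z; rewrite inE; exact: dI.
Qed.

Lemma maxset_dn m : Defs.maxset (dn m) = [set m].
Proof.
apply/setP=> y; rewrite in_maxset !inE; apply/andP/eqP => [[ym /forall_inP H]|->].
  by apply/eqP; rewrite eq_sym; apply: (implyP (H m _)) => //; rewrite inE.
split=> //; apply/forall_inP=> z; rewrite inE => zm; apply/implyP=> mz.
by rewrite eq_le zm mz.
Qed.

Lemma phi_dn X m : upclosed X -> m \notin X ->
  phi tau eta X (dn m) - phi tau eta (m |: X) (dn m)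
  = (1 + eta m) * \prod_(i in dn m :\ m) tau i.
Proof.
move=> /upclosedP uX mX.
have e1 : dn m :&: X = set0.
  apply/setP=> z; rewrite !inE; apply/negP=> /andP[zm zX].
  by move: (uX _ _ zX zm); rewrite (negbTE mX).
have e2 : dn m :&: (m |: X) = [set m].
  apply/setP=> z; rewrite !inE; case: (z =P m) => [->|nzm]; first by rewrite lexx.
  by apply/negP=> /andP[zm zX]; move: (uX _ _ zX zm); rewrite (negbTE mX).
rewrite /phi e1 e2 maxset_dn sub0set subxx cards0 cards1 expr0 expr1 mul1r.
have e3 : [set m] :\: X = [set m].
  apply/setP=> z; rewrite !inE; case: (z =P m) => [->|_]; last by rewrite andbF.
  by rewrite mX.
have e4 : [set m] :\: (m |: X) = set0.
  apply/setP=> z; rewrite !inE; case: (z =P m) => [->|_]; last by rewrite andbF.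
  by [].
have p3 : \prod_(i in [set m] :\: X) eta i = eta m by rewrite e3 big_set1.
have p4 : \prod_(i in [set m] :\: (m |: X)) eta i = 1 by rewrite e4 big_set0.
rewrite p3 p4 mulr1 mulN1r opprK.
by rewrite mulrC mulrDl mul1r addrC.
Qed.

Lemma delta_coef X m k : upclosed X -> m \notin X -> (k <= #|dn m|)%N ->
  (pi X - pi (m |: X))`_k =
  if k == #|dn m| then (1 + eta m) * \prod_(i in dn m :\ m) tau i else 0.
Proof.
move=> uX mX kle; rewrite coefB !coef_pi -sumrB.
have rest : forall I, downclosed_in setT I -> (#|I| == k) -> I != dn m ->
    phi tau eta X I - phi tau eta (m |: X) I = 0.
  move=> I dI /eqP cI nI; rewrite phi_notin ?subrr //.
  apply/negP=> mI; move/negP: nI; apply; apply/eqP; apply/esym/eqP.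
  rewrite eqEcard dn_sub //= cI //.
case: eqP => [ek|nk].
  have dd : downclosed_in setT (dn m).
    apply/downclosedP=> a b; rewrite !inE => am ba; exact: le_trans ba am.
  rewrite (bigD1 (dn m)) /=; last by rewrite dd ek eqxx.
  rewrite phi_dn // [X in _ + X]big1 ?addr0 // => I /andP[/andP[dI cI] nI].
  exact: rest.
apply: big1 => I /andP[dI cI]; apply: (rest I dI cI).
apply/eqP=> eI; apply: nk; by move/eqP: cI; rewrite eI.
Qed.

Definition gtp (p q : {poly R}) :=
  exists k, (forall i, (i < k)%N -> p`_i = q`_i) /\ q`_k < p`_k.

Lemma gtp_irr p : ~ gtp p p.
Proof. by case=> k [_]; rewrite ltxx. Qed.

Lemma gtp_trans p q r : gtp p q -> gtp q r -> gtp p r.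
Proof.
case=> k1 [e1 l1] [k2 [e2 l2]].
have [lt|gt|eq] := ltngtP k1 k2.
- exists k1; split; first by move=> i ik; rewrite e1 // e2 // (ltn_trans ik lt).
  by rewrite -(e2 _ lt).
- exists k2; split; first by move=> i ik; rewrite e1 ?e2 // (ltn_trans ik gt).
  by rewrite (e1 _ gt).
- subst k2; exists k1; split; first by move=> i ik; rewrite e1 ?e2.
  exact: lt_trans l2 l1.
Qed.

Lemma gtp_neq p q : gtp p q -> p != q.
Proof. by move=> g; apply/eqP=> e; subst q; apply: (gtp_irr g). Qed.

Lemma gtp_total p q : p != q -> gtp p q \/ gtp q p.
Proof.
move=> npq.
have ex : exists i, p`_i != q`_i.
  case: (boolP [exists i : 'I_(maxn (size p) (size q)), p`_i != q`_i]).
    by case/existsP=> i Hi; exists i.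
  rewrite negb_exists => /forallP H; case/eqP: npq; apply/polyP=> i.
  case: (ltnP i (maxn (size p) (size q))) => [lt|ge].
    by move: (H (Ordinal lt)); rewrite negbK => /eqP.
  rewrite !nth_default //; apply: leq_trans ge; by rewrite ?leq_maxl ?leq_maxr.
case: (ex_minnP ex) => k nk kmin.
have eqb : forall i, (i < k)%N -> p`_i = q`_i.
  move=> i ik; apply/eqP; apply: contraT => ni.
  by move: (kmin i ni); rewrite leqNgt ik.
have [lt|gt|eq] := ltgtP p`_k q`_k.
- by right; exists k; split => // i ik; rewrite eqb.
- by left; exists k.
- by rewrite eq eqxx in nk.
Qed.

Lemma gtp_step X m : upclosed X -> m \notin X -> gtp (pi X) (pi (m |: X)).
Proof.
move=> uX mX; exists #|dn m|; split.
  move=> i ilt; apply/eqP; rewrite -subr_eq0 -coefB delta_coef ?(ltnW ilt) //.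
  by rewrite (ltn_eqF ilt).
rewrite -subr_gt0 -coefB delta_coef // eqxx.
apply: mulr_gt0; last by apply: prodr_gt0 => i _.
by rewrite addrC -[1]opprK subr_gt0.
Qed.


Definition step (B Z : {set T}) : {set T} :=
  if [pick m in B :\: Z | [forall w in B :\: Z, ~~ (m < w)%O]] is Some m
  then m |: Z else Z.

Lemma step_spec B Z : upclosed B -> upclosed Z -> Z \subset B -> Z != B ->
  exists m, [/\ m \in B, m \notin Z, step B Z = m |: Z & upclosed (m |: Z)].
Proof.
move=> /upclosedP uB /upclosedP uZ ZB nZB.
have [a aBZ] : exists a, a \in B :\: Z.
  apply/set0Pn; rewrite setD_eq0; apply: contra nZB => BZ.
  by rewrite eqEsubset ZB BZ.
rewrite /step; case: pickP => [m /andP[mBZ /forall_inP mmax] | none].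
  move: (mBZ); rewrite inE => /andP[mZ mB]; exists m; split=> //.
  apply/upclosedP=> x y; rewrite !inE => /predU1P[->|xZ] xy; last first.
    by rewrite (uZ _ _ xZ xy) orbT.
  case: (y =P m) => //= nym; apply: contraT => yZ.
  have : y \in B :\: Z by rewrite inE yZ (uB _ _ mB xy).
  move/mmax; rewrite lt_neqAle xy andbT eq_sym.
  by move/eqP: nym => ->.
have [z zBZ [_ zmax]] := ex_maximal aBZ.
move: (none z); rewrite zBZ /=; move/negP; case; apply/forall_inP=> w wBZ.
apply/negP=> zw; move: (zmax w wBZ (ltW zw)) => e; subst w.
by rewrite ltxx in zw.
Qed.

Definition chn B A i := iter i (step B) A.

Lemma chn_spec B A : upclosed B -> upclosed A -> A \subset B ->
  forall i, (i <= #|B| - #|A|)%N ->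
  [/\ upclosed (chn B A i), chn B A i \subset B & #|chn B A i| = (#|A| + i)%N].
Proof.
move=> uB uA AB; elim=> [_|i IH ilt]; first by rewrite /chn /= addn0.
have [ui sub ci] := IH (ltnW ilt).
have nB : chn B A i != B.
  apply/eqP=> e; move: ci ilt; rewrite e => ->; lia.
have [m [mB mi e um]] := step_spec uB ui sub nB.
rewrite /chn iterS -/(chn B A i) e.
split=> //; first by rewrite subUset sub1set mB.
by rewrite cardsU1 mi ci; lia.
Qed.

Lemma chn0 B A : chn B A 0 = A. Proof. by []. Qed.

Lemma chn_end B A : upclosed B -> upclosed A -> A \subset B ->
  chn B A (#|B| - #|A|) = B.
Proof.
move=> uB uA AB; have [_ sub c] := chn_spec uB uA AB (leqnn _).
apply/eqP; rewrite eqEcard sub c /=.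
have := subset_leq_card AB; lia.
Qed.

Lemma chn_gt1 B A i : upclosed B -> upclosed A -> A \subset B ->
  (i < #|B| - #|A|)%N -> gtp (pi (chn B A i)) (pi (chn B A i.+1)).
Proof.
move=> uB uA AB ilt; have [ui sub ci] := chn_spec uB uA AB (ltnW ilt).
have nB : chn B A i != B.
  apply/eqP=> e; move: ci ilt; rewrite e => ->; lia.
have [m [mB mi e um]] := step_spec uB ui sub nB.
rewrite /chn iterS -/(chn B A i) e; exact: gtp_step.
Qed.

Lemma chn_gt B A i j : upclosed B -> upclosed A -> A \subset B ->
  (i < j)%N -> (j <= #|B| - #|A|)%N -> gtp (pi (chn B A i)) (pi (chn B A j)).
Proof.
move=> uB uA AB; elim: j => // j IH ij jle.
have g := chn_gt1 uB uA AB jle.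
rewrite ltnS leq_eqVlt in ij; case/orP: ij => [/eqP->|lt]; first exact: g.
exact: gtp_trans (IH lt (ltnW jle)) g.
Qed.

Definition gep (p q : {poly R}) := p = q \/ gtp p q.

Lemma chn_ge B A i j : upclosed B -> upclosed A -> A \subset B ->
  (i <= j)%N -> (j <= #|B| - #|A|)%N -> gep (pi (chn B A i)) (pi (chn B A j)).
Proof.
move=> uB uA AB; rewrite leq_eqVlt => /orP[/eqP->|lt] jle; first by left.
by right; apply: chn_gt.
Qed.

Lemma gep_gtp p q r : gep p q -> gtp q r -> gtp p r.
Proof. by case=> [->//|]; apply: gtp_trans. Qed.

Lemma gtp_gep p q r : gtp p q -> gep q r -> gtp p r.
Proof. by move=> g [<-//|]; apply: gtp_trans. Qed.

Lemma mem_Theta p : reflect (exists2 M, upclosed M & p = pi M) (p \in Theta tau eta).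
Proof.
rewrite /Theta mem_undup; apply: (iffP mapP) => [[M] | [M uM ->]].
  by rewrite mem_enum => uM ->; exists M.
by exists M; rewrite ?mem_enum.
Qed.

Lemma size_ge (F : nat -> {poly R}) N :
  (forall i j, (i < j)%N -> (j < N)%N -> gtp (F i) (F j)) ->
  (forall i, (i < N)%N -> F i \in Theta tau eta) ->
  (N <= size (Theta tau eta))%N.
Proof.
move=> Hg Hm; rewrite -(size_iota 0 N) -(size_map F).
apply: uniq_leq_size.
  rewrite map_inj_in_uniq ?iota_uniq // => i j; rewrite !mem_iota /= !add0n.
  move=> iN jN e; case: (ltngtP i j) => // [lt|gt].
    by move: (gtp_neq (Hg _ _ lt jN)); rewrite e eqxx.
  by move: (gtp_neq (Hg _ _ gt iN)); rewrite e eqxx.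
move=> p /mapP[i]; rewrite mem_iota add0n => /andP[_ iN] ->; exact: Hm.
Qed.

Lemma upclosed0 : upclosed (set0 : {set T}).
Proof. by apply/upclosedP=> x y; rewrite inE. Qed.

Lemma upclosedT : upclosed (setT : {set T}).
Proof. by apply/upclosedP=> x y; rewrite inE. Qed.

Lemma chn_in B A i : upclosed B -> upclosed A -> A \subset B ->
  (i <= #|B| - #|A|)%N -> pi (chn B A i) \in Theta tau eta.
Proof.
move=> uB uA AB ile; have [u _ _] := chn_spec uB uA AB ile.
by apply/mem_Theta; exists (chn B A i).
Qed.

Lemma Theta_ge : (#|T|.+1 <= size (Theta tau eta))%N.
Proof.
have e : (#|T| = #|(setT : {set T})| - #|(set0 : {set T})|)%N by rewrite cardsT cards0 subn0.
have u0 := upclosed0; have uT := upclosedT; have s0 := sub0set (setT : {set T}).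
apply: (@size_ge (fun i => pi (chn setT set0 i))) => [i j ij jn|i iN].
  by apply: chn_gt => //; rewrite -e.
by apply: chn_in => //; rewrite -e.
Qed.

Lemma L_gen C D e : upclosed C -> upclosed D ->
  (e = 0%N /\ pi C = pi D \/ e = 1%N /\ gtp (pi C) (pi D)) ->
  (#|C| + (#|T| - #|D|) + 1 + e <= size (Theta tau eta))%N.
Proof.
move=> uC uD He.
have e1 : (#|C| - #|(set0 : {set T})| = #|C|)%N by rewrite cards0 subn0.
have e2 : (#|(setT : {set T})| - #|D| = #|T| - #|D|)%N by rewrite cardsT.
have u0 := upclosed0; have uT := upclosedT.
have s0 : set0 \subset C := sub0set C.
have sT : D \subset setT := subsetT D.
pose g i := chn C set0 i; pose h j := chn setT D j.
have gC : g #|C| = C by rewrite /g -{1}e1 chn_end.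
have hD : h 0%N = D by [].
have e01 : (e <= 1)%N by case: He => [[->]|[->]].
have K : forall j, (1 - e <= j)%N -> (j <= #|T| - #|D|)%N -> gtp (pi C) (pi (h j)).
  move=> j j1 jle; case: He => [[ee eq]|[ee gt]]; subst e.
    rewrite eq -hD; apply: chn_gt => //; lia.
  apply: gtp_gep gt _; rewrite -hD; apply: chn_ge => //; by rewrite e2.
have Gc : forall i, (i <= #|C|)%N -> gep (pi (g i)) (pi C).
  move=> i ile; rewrite -[in X in gep _ X]gC; apply: chn_ge => //; by rewrite e1.
apply: (@size_ge (fun i => if (i <= #|C|)%N then pi (g i) else pi (h (i - #|C| - e)%N))).

  move=> i j ij jN.
  case: (leqP j #|C|) => jC.
    rewrite (leq_trans (ltnW ij) jC); apply: chn_gt => //; by rewrite e1.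
  case: (leqP i #|C|) => iC.
    apply: gep_gtp (Gc _ iC) (K _ _ _); lia.
  apply: chn_gt => //; rewrite ?e2; lia.
move=> i iN; case: (leqP i #|C|) => iC.
  apply: chn_in => //; by rewrite e1.
apply: chn_in => //; rewrite e2; lia.
Qed.

Lemma L_eq C D : upclosed C -> upclosed D -> pi C = pi D ->
  (#|C| + (#|T| - #|D|) + 1 <= size (Theta tau eta))%N.
Proof. by move=> uC uD e; have := @L_gen C D 0 uC uD (or_introl (conj erefl e)); rewrite addn0. Qed.

Lemma L_gt C D : upclosed C -> upclosed D -> gtp (pi C) (pi D) ->
  (#|C| + (#|T| - #|D|) + 2 <= size (Theta tau eta))%N.
Proof. by move=> uC uD g; have := @L_gen C D 1 uC uD (or_intror (conj erefl g)); rewrite -addnA. Qed.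

Definition P2p := forall C D : {set T}, upclosed C -> upclosed D ->
  #|C| = #|D| -> pi C = pi D.

Lemma P2_le : P2p -> (size (Theta tau eta) <= #|T|.+1)%N.
Proof.
move=> P2.
have e : (#|T| = #|(setT : {set T})| - #|(set0 : {set T})|)%N by rewrite cardsT cards0 subn0.
have u0 := upclosed0; have uT := upclosedT; have s0 := sub0set (setT : {set T}).
rewrite -(size_iota 0 #|T|.+1) -(size_map (fun i => pi (chn setT set0 i))).
apply: uniq_leq_size; first exact: undup_uniq.
move=> p /mem_Theta[M uM ->]; apply/mapP; exists #|M|.
  by rewrite mem_iota add0n ltnS max_card.
have Mle : (#|M| <= #|(setT : {set T})| - #|(set0 : {set T})|)%N by rewrite -e max_card.
have [u _ c] := chn_spec uT u0 s0 Mle.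
by apply: P2 => //; rewrite c cards0.
Qed.


Lemma upc X (uX : upclosed X) x y : x \in X -> (x <= y)%O -> y \in X.
Proof. by move: x y; apply/upclosedP. Qed.

Lemma coef_delta_pos m : 0 < (1 + eta m) * \prod_(i in dn m :\ m) tau i.
Proof.
apply: mulr_gt0; last by apply: prodr_gt0 => i _.
by rewrite addrC -[1]opprK subr_gt0.
Qed.

Lemma P2_delta (P2 : P2p) X X' m m' : upclosed X -> upclosed X' ->
  m \notin X -> m' \notin X' -> upclosed (m |: X) -> upclosed (m' |: X') ->
  #|X| = #|X'| -> pi X - pi (m |: X) = pi X' - pi (m' |: X').
Proof.
move=> uX uX' mX mX' uX1 uX1' c.
rewrite (P2 X X') // (P2 (m |: X) (m' |: X')) //.
by rewrite !cardsU1 mX mX' c.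
Qed.

Lemma P2_dn (P2 : P2p) X X' m m' : upclosed X -> upclosed X' ->
  m \notin X -> m' \notin X' -> upclosed (m |: X) -> upclosed (m' |: X') ->
  #|X| = #|X'| -> ~ (#|dn m| < #|dn m'|)%N.
Proof.
move=> uX uX' mX mX' uX1 uX1' c lt.
have := congr1 (fun p : {poly R} => p`_#|dn m|) (P2_delta P2 uX uX' mX mX' uX1 uX1' c).
rewrite /= delta_coef // delta_coef // ?(ltnW lt) // eqxx (ltn_eqF lt) => e.
by move: (coef_delta_pos m); rewrite e ltxx.
Qed.

Lemma P2_hier (P2 : P2p) : hierarchical T.
Proof.
move=> u v luv; apply: contraT => nuv.
have [w wv lw] : exists2 w, (w < v)%O & (len w).+1 = len v.
  by apply: len_pred; have := len_gt0 u; lia.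
have nwu : ~~ (w <= u)%O.
  apply/negP=> wu; move: wu; rewrite le_eqVlt => /orP[/eqP e|lt].
    by subst w; rewrite (ltW wv) in nuv.
  by have := len_lt lt; lia.
have betw : forall t, (w < t)%O -> (t < v)%O -> False.
  by move=> t wt tv; have := len_lt wt; have := len_lt tv; lia.
pose X' := [set z | ~~ (z <= v)%O].
pose X1 := v |: X'.
have uX' : upclosed X'.
  apply/upclosedP=> x y; rewrite !inE => xv xy; apply: contra xv => yv.
  exact: le_trans xy yv.
have vX' : v \notin X' by rewrite inE lexx.
have uX1 : upclosed X1.
  apply/upclosedP=> x y; rewrite !inE => /predU1P[->|xv] xy.
    by case: (y =P v) => //= nyv; apply/negP=> yv; apply: nyv; apply/eqP; rewrite eq_le yv xy.
  have : y \in X' by apply: (upc uX' _ xy); rewrite inE.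
  by rewrite inE => ->; rewrite orbT.
have uS : u \in [set y in X1 | (y <= u)%O] by rewrite !inE nuv lexx orbT.
have [z0 z0S [_ z0min]] := ex_minimal uS.
move: z0S; rewrite inE => /andP[z0X1 z0u].
have z0min' : forall y, y \in X1 -> (y <= z0)%O -> y = z0.
  by move=> y yX1 yz; apply: z0min => //; rewrite inE yX1 (le_trans yz z0u).
pose X := X1 :\ z0.
have uX : upclosed X.
  apply/upclosedP=> x y; rewrite !inE => /andP[nxz xX1] xy.
  have : y \in X1 by apply: (upc uX1 _ xy); rewrite !inE.
  rewrite !inE => ->; rewrite andbT; apply/eqP=> e; subst y.
  by move/eqP: nxz; apply; apply: z0min' => //; rewrite !inE.
have wX : w \notin X.
  by rewrite !inE (ltW wv) (lt_eqF wv) /= andbF.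
have uwX : upclosed (w |: X).
  apply/upclosedP=> x y; rewrite !inE => /predU1P[->|xX] xy; last first.
    have : y \in X by apply: (upc uX _ xy); rewrite !inE.
    by rewrite !inE => ->; rewrite orbT.
  case: (y =P w) => //= nyw.
  have wy : (w < y)%O by rewrite lt_neqAle xy andbT eq_sym; apply/eqP.
  apply/andP; split.
    apply/eqP=> e; subst y; by move: nwu; rewrite (le_trans (ltW wy) z0u).
  case: (y =P v) => //= nyv; apply/negP=> yv.
  by apply: (betw y wy); rewrite lt_neqAle yv andbT; apply/eqP.
have cX : #|X| = #|X'|.
  have := cardsD1 z0 X1; rewrite z0X1 cardsU1 vX' => e.
  by rewrite /X; apply/esym/(addnI e).
exfalso; apply: (P2_dn P2 uX uX' wX vX' uwX uX1 cX).
apply: proper_card; apply/properP; split.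
  apply/subsetP=> t; rewrite !inE => tw; exact: le_trans tw (ltW wv).
exists v; rewrite !inE ?lexx //; apply/negP=> vw.
by move: (lt_le_trans wv vw); rewrite ltxx.
Qed.

Lemma P2_eta (P2 : P2p) u v : len u = len v -> eta u = eta v.
Proof.
move=> luv; have H := P2_hier P2.
pose X := [set z | ~~ (z <= u)%O && ~~ (z <= v)%O].
have uX : upclosed X.
  apply/upclosedP=> x y; rewrite !inE => /andP[xu xv] xy; apply/andP; split.
    by apply: contra xu => yu; exact: le_trans xy yu.
  by apply: contra xv => yv; exact: le_trans xy yv.
have uXm : forall a, len a = len u -> upclosed (a |: X).
  move=> a lau; apply/upclosedP=> x y; rewrite !inE => /predU1P[->|xX] xy; last first.
    have : y \in X by apply: (upc uX _ xy); rewrite !inE.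
    by rewrite !inE => ->; rewrite orbT.
  case: (y =P a) => //= nya.
  have ay : (a < y)%O by rewrite lt_neqAle xy andbT eq_sym; apply/eqP.
  apply/andP; split; apply/negP => yb.
    by have := lt_le_trans ay yb; rewrite (hier_lt H) lau ltnn.
  by have := lt_le_trans ay yb; rewrite (hier_lt H) lau luv ltnn.
have uX_u : u \notin X by rewrite inE lexx.
have vX_v : v \notin X by rewrite inE lexx andbF.
have uXu := uXm u erefl.
have uXv := uXm v (esym luv).
have cdn : #|dn u| = #|dn v|.
  case: (ltngtP #|dn u| #|dn v|) => // lt; exfalso.
    exact: (P2_dn P2 uX uX uX_u vX_v uXu uXv erefl lt).
  exact: (P2_dn P2 uX uX vX_v uX_u uXv uXu erefl lt).
have := congr1 (fun p : {poly R} => p`_#|dn u|) (P2_delta P2 uX uX uX_u vX_v uXu uXv erefl).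
rewrite /= delta_coef // [in RHS]delta_coef // ?cdn // eqxx.
have eset : dn u :\ u = dn v :\ v.
  apply/setP=> z; rewrite !inE -!lt_neqAle !(hier_lt H) luv //.
rewrite eset => /mulIf; rewrite gt_eqF; last by apply: prodr_gt0 => i _.
by move=> /(_ isT) /addrI.
Qed.

End Poly.

Section Swap.
Context (d : Order.disp_t) (T : finPOrderType d) (R : realFieldType) (tau eta : T -> R).
Local Open Scope ring_scope.
Local Notation pi D := (pi_poly tau eta setT D).
Variables (u v : T).

Definition sw (x : T) : T := if x == u then v else if x == v then u else x.

Lemma swK : involutive sw.
Proof.
move=> x; rewrite /sw.
case: (x =P u) => [->|nxu]; first by rewrite eqxx; case: (v =P u) => [->|]; rewrite ?eqxx.
case: (x =P v) => [->|nxv]; first by rewrite eqxx.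
by move/eqP: nxu => /negbTE->; move/eqP: nxv => /negbTE->.
Qed.

Lemma sw_inj : injective sw. Proof. exact: inv_inj swK. Qed.

Hypothesis H : hierarchical T.
Hypothesis luv : len u = len v.
Hypothesis He : forall a b : T, len a = len b -> eta a = eta b.

Lemma len_sw x : len (sw x) = len x.
Proof. by rewrite /sw; case: (x =P u) => [->//|_]; case: (x =P v) => [->//|_]. Qed.

Lemma lt_sw x y : (sw x < sw y)%O = (x < y)%O.
Proof. by rewrite !(hier_lt H) !len_sw. Qed.

Lemma le_sw x y : (sw x <= sw y)%O = (x <= y)%O.
Proof. by rewrite !le_eqVlt lt_sw (inj_eq sw_inj). Qed.

Definition pre (S : {set T}) : {set T} := [set x | sw x \in S].

Lemma in_pre S x : (x \in pre S) = (sw x \in S).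
Proof. by rewrite inE. Qed.

Lemma preI A B : pre (A :&: B) = pre A :&: pre B.
Proof. by apply/setP=> x; rewrite !in_pre !inE. Qed.

Lemma preD A B : pre (A :\: B) = pre A :\: pre B.
Proof. by apply/setP=> x; rewrite !in_pre !inE. Qed.

Lemma pre_pre S : pre (pre S) = S.
Proof. by apply/setP=> x; rewrite !in_pre swK. Qed.

Lemma pre_inj : injective pre.
Proof. exact: can_inj pre_pre. Qed.

Lemma card_pre S : #|pre S| = #|S|.
Proof. exact: card_preimset sw_inj. Qed.

Lemma sub_pre A B : (pre A \subset pre B) = (A \subset B).
Proof.
apply/subsetP/subsetP => s x.
  by move=> xA; have := s (sw x); rewrite !in_pre swK; apply.
by rewrite !in_pre; apply: s.
Qed.

Lemma up_pre C : upclosed C -> upclosed (pre C).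
Proof.
move=> /upclosedP uC; apply/upclosedP=> x y; rewrite !in_pre => xC xy.
by apply: uC xC _; rewrite le_sw.
Qed.

Lemma dc_pre1 I : downclosed_in setT I -> downclosed_in setT (pre I).
Proof.
move=> /downclosedP uC; apply/downclosedP=> x y; rewrite !in_pre => xC xy.
by apply: uC xC _; rewrite le_sw.
Qed.

Lemma dc_pre I : downclosed_in setT (pre I) = downclosed_in setT I.
Proof.
apply/idP/idP; last exact: dc_pre1.
by move/dc_pre1; rewrite pre_pre.
Qed.

Lemma maxset_pre I : Defs.maxset (pre I) = pre (Defs.maxset I).
Proof.
apply/setP=> x; rewrite (in_maxset (pre I) x) (in_pre (Defs.maxset I) x).
rewrite (in_maxset I (sw x)) (in_pre I x); congr (_ && _).
apply/forall_inP/forall_inP => Hf z.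
  rewrite -{1}(swK z) -in_pre => zI; apply/implyP=> le.
  by have := implyP (Hf _ zI); rewrite -le_sw swK => /(_ le) /eqP <-; rewrite swK.
rewrite in_pre => zI; apply/implyP=> le.
by have := implyP (Hf _ zI); rewrite le_sw => /(_ le) /eqP e; rewrite -(inj_eq sw_inj) e.
Qed.

Lemma stab I : downclosed_in setT I -> pre (I :\: Defs.maxset I) = I :\: Defs.maxset I.
Proof.
move=> /downclosedP dI.
have K : forall x y, len x = len y -> x \in I :\: Defs.maxset I -> y \in I :\: Defs.maxset I.
  move=> x y lxy; rewrite !inE => /andP[nm xI]; rewrite xI /= in nm.
  move: nm; rewrite negb_forall_in => /existsP[z /andP[zI /negP nz]].
  have xz : (x < z)%O.
    move: nz; case: (boolP (x <= z)%O) => //= xz'; case: (z =P x) => //= nzx _.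
    by rewrite lt_neqAle xz' andbT eq_sym; apply/eqP.
  have yz : (y < z)%O by rewrite (hier_lt H) -lxy -(hier_lt H).
  have yI : y \in I := dI _ _ zI (ltW yz).
  rewrite yI andbT /= negb_forall_in; apply/existsP; exists z.
  by rewrite zI (ltW yz) /= eq_sym (lt_eqF yz).
apply/setP=> x; rewrite in_pre; apply/idP/idP => Hx.
  exact: (K _ _ (len_sw x) Hx).
exact: (K _ _ (esym (len_sw x)) Hx).
Qed.

Lemma prod_pre S : \prod_(i in pre S) eta i = \prod_(i in S) eta i.
Proof.
rewrite [RHS](reindex_inj sw_inj) /=; apply: eq_big => i; first by rewrite in_pre.
by move=> _; apply: He; rewrite len_sw.
Qed.

Lemma phi_pre C I : downclosed_in setT I -> phi tau eta (pre C) (pre I) = phi tau eta C I.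
Proof.
move=> dI; rewrite /phi maxset_pre -preI sub_pre.
case: ifP => // _; congr (_ * _ * _).
- by congr (_ ^+ _); exact: card_pre.
- exact: (congr1 (fun S : {set T} => \prod_(i in S) tau i) (etrans (esym (preD _ _)) (stab dI))).
exact: (etrans (congr1 (fun S : {set T} => \prod_(i in S) eta i) (esym (preD _ _))) (prod_pre _)).
Qed.

Lemma pi_pre C : pi (pre C) = pi C.
Proof.
rewrite /pi_poly (reindex_inj pre_inj) /=; apply: eq_big => I; first by rewrite dc_pre.
move=> dI; rewrite phi_pre; last by rewrite -dc_pre.
congr (_ *: (_ ^+ _)); exact: card_pre.
Qed.

End Swap.

Lemma P4_P2 (d : Order.disp_t) (T : finPOrderType d) (R : realFieldType) (tau eta : T -> R) :
  hierarchical T -> (forall a b : T, len a = len b -> eta a = eta b) -> P2p tau eta.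
Proof.
move=> H He C D uC uD cCD.
move: {2}#|C :\: D| (erefl #|C :\: D|) => n.
elim: n C uC cCD => [|n IH] C uC cCD en.
  have CD : C \subset D by rewrite -setD_eq0 -cards_eq0 en.
  have -> : C = D by apply/eqP; rewrite eqEcard CD cCD leqnn.
  by [].
have [u uCD] : exists u, u \in C :\: D by apply/card_gt0P; rewrite en.
have [v vDC] : exists v, v \in D :\: C.
  apply/card_gt0P; have := cardsID D C; have := cardsID C D; rewrite setIC; lia.
move: (uCD) (vDC); rewrite !inE => /andP[uD' uC'] /andP[vC' vD'].
have luv : len u = len v.
  case: (ltngtP (len u) (len v)) => // lt.
    have uv : (u <= v)%O by apply: H; rewrite addn1.
    by move: vC'; rewrite (upc uC uC' uv).
  have vu : (v <= u)%O by apply: H; rewrite addn1.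
  by move: uD'; rewrite (upc uD vD' vu).
have <- := pi_pre tau H luv He C.
apply: IH.
- exact: up_pre.
- by rewrite card_pre.
apply/eqP; rewrite -eqSS -en (cardsD1 u (C :\: D)) uCD add1n eqSS; apply/eqP.
apply: eq_card => x; rewrite !inE /sw.
case: (x =P u) => [->|nxu] /=; first by rewrite (negbTE vC') andbF.
by case: (x =P v) => [->|nxv] /=; rewrite ?vD'.
Qed.

Unset Implicit Arguments.
Local Open Scope ring_scope.

Theorem theorem3p5 (R : realFieldType) (d : Order.disp_t) (T : finPOrderType d)
    (tau eta : T -> R)
    (htau : forall i, 0 < tau i) (heta1 : forall i, -1 < eta i)
    (heta0 : forall i, eta i != 0) :
  (#|T|.+1 <= size (Theta tau eta))%N /\
  let P1 := size (Theta tau eta) = #|T|.+1 in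
  let P2 := forall C D : {set T}, upclosed C -> upclosed D ->
              #|C| = #|D| -> pi_poly tau eta setT C = pi_poly tau eta setT D in
  let P3 := forall C D : {set T}, upclosed C -> upclosed D ->
              (pi_poly tau eta setT C = pi_poly tau eta setT D <-> #|C| = #|D|) in
  let P4 := hierarchical T /\
              (forall u v : T, len u = len v -> eta u = eta v) in
  [/\ P1 <-> P2, P1 <-> P3 & P1 <-> P4].
Proof.
have Tge := Theta_ge htau heta1.
split=> //.
move=> P1 P2 P3 P4.
have mc : forall C : {set T}, (#|C| <= #|T|)%N by move=> C; exact: max_card.
have P1_P2 : P1 -> P2.
  move=> e C D uC uD c; case: (eqVneq (pi_poly tau eta setT C) (pi_poly tau eta setT D)) => // ne.
  have := mc C; have := mc D.
  case: (gtp_total ne) => g.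
    by have := L_gt htau heta1 uC uD g; rewrite e c; lia.
  by have := L_gt htau heta1 uD uC g; rewrite e c; lia.
have P2_P1 : P2 -> P1.
  by move=> H; apply/eqP; rewrite eqn_leq Tge andbT; exact: P2_le.
have P1_P3 : P1 -> P3.
  move=> e C D uC uD; split; last exact: P1_P2.
  move=> epi; have h1 := L_eq htau heta1 uC uD epi; have h2 := L_eq htau heta1 uD uC (esym epi).
  have := mc C; have := mc D; rewrite e in h1 h2; lia.
have P3_P2 : P3 -> P2 by move=> H C D uC uD c; exact/(H C D uC uD).
have P2_P4 : P2 -> P4.
  by move=> H; split; [exact: P2_hier H | exact: P2_eta H].
have P4_P2' : P4 -> P2 by case=> H He; exact: P4_P2.
split; split; auto.
Qed.
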